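(* Let $\alpha=\exp\left(\frac{2\pi i}{5}\right)$, let $c,x\in\mathbb{C}$, let $a_1,\dots,a_p\in\mathbb{C}$ and $b_1,\dots,b_q\in\mathbb{C}\setminus\{0,-1,-2,\dots\}$, and suppose either $5p\le 5q+4$ (with $x$ arbitrary), or $p=q+1$ and $\left|\left(\frac{cx^2}{5^{1+q-p}}\right)^5\right|<1$. Then $$\sum_{k=0}^{4}\alpha^{k}\,{}_pF_q\left[\begin{array}{c}a_1,\dots,a_p;\\ b_1,\dots,b_q;\end{array}c(x\alpha^k)^2\right] =\frac{5c^2x^4}{2}\,\frac{\prod_{i=1}^{p}(a_i)_2}{\prod_{i=1}^{q}(b_i)_2}\;{}_{5p}F_{5q+4}\left[\begin{array}{c}\Big\{\tfrac{a_j+2}{5},\tfrac{a_j+3}{5},\tfrac{a_j+4}{5},\tfrac{a_j+5}{5},\tfrac{a_j+6}{5}\Big\}_{j=1}^{p};\\ \tfrac35,\tfrac45,\tfrac65,\tfrac75,\Big\{\tfrac{b_j+2}{5},\tfrac{b_j+3}{5},\tfrac{b_j+4}{5},\tfrac{b_j+5}{5},\tfrac{b_j+6}{5}\Big\}_{j=1}^{q};\end{array}\left(\frac{cx^2}{5^{1+q-p}}\right)^5\right],$$ where the braces denote the lists of parameters obtained for $j=1,\dots,p$ (resp. $j=1,\dots,q$).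
   Context: The generalized hypergeometric function is ${}_pF_q\left[\begin{array}{c}\alpha_1,\dots,\alpha_p;\\\beta_1,\dots,\beta_q;\end{array}z\right]=\sum_{n=0}^{\infty}\frac{(\alpha_1)_n\cdots(\alpha_p)_n}{(\beta_1)_n\cdots(\beta_q)_n}\frac{z^n}{n!}$, with $(\lambda)_n=\lambda(\lambda+1)\cdots(\lambda+n-1)$, $(\lambda)_0=1$; in particular $(\lambda)_2=\lambda(\lambda+1)$. Values of parameters and variables for which the expressions do not make sense are excluded. *)

(* Defs.v *)
From Stdlib Require Import Reals List ClassicalEpsilon Factorial.
From Coquelicot Require Import Coquelicot.
Import ListNotations.
Open Scope C_scope.

Definition Cexp (z : C) : C :=
  RtoC (exp (Re z)) * (RtoC (cos (Im z)) + Ci * RtoC (sin (Im z))).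

Fixpoint poch (l : C) (n : nat) : C :=
  match n with
  | O => 1
  | S m => poch l m * (l + RtoC (INR m))
  end.

Definition prodC (s : list C) : C := fold_right Cmult 1 s.

Definition hyp_term (a b : list C) (z : C) (n : nat) : C :=
  prodC (map (fun ai => poch ai n) a) / prodC (map (fun bi => poch bi n) b)
  * Cpow z n / RtoC (INR (fact n)).

(* value of the generalized hypergeometric series (sum of the series when it
   converges; an arbitrary value 0 otherwise) *)
Definition pFq (a b : list C) (z : C) : C :=
  match excluded_middle_informative (exists l, is_series (hyp_term a b z) l) with
  | left H => proj1_sig (constructive_indefinite_description _ H)
  | right _ => 0
  end.

Definition shift5 (u : C) : list C :=
  [ (u + 2) / 5; (u + 3) / 5; (u + 4) / 5; (u + 5) / 5; (u + 6) / 5 ].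

Definition alpha : C := Cexp (0, 2 * PI / 5)%R.

(* Main.v *)
Require Import Defs.
From Stdlib Require Import Reals List Lia Lra ClassicalEpsilon Factorial.
From Coquelicot Require Import Coquelicot.
Import ListNotations.
Open Scope C_scope.

Lemma is_series_unique_C (u : nat -> C) l1 l2 : is_series u l1 -> is_series u l2 -> l1 = l2.
Proof.
  intros H1 H2. exact (@filterlim_locally_unique nat C_AbsRing C_NormedModule eventually (Proper_StrongProper _ eventually_filter) (sum_n u) l1 l2 H1 H2).
Qed.

Lemma pFq_val a b z l : is_series (hyp_term a b z) l -> pFq a b z = l.
Proof.
  intros H. unfold pFq.
  destruct excluded_middle_informative as [e|n].
  - destruct (constructive_indefinite_description _ e) as [l' Hl'].
    exact (is_series_unique_C _ _ _ Hl' H).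
  - exfalso; apply n; exists l; exact H.
Qed.

Lemma poch_S l n : poch l (S n) = poch l n * (l + RtoC (INR n)).
Proof. reflexivity. Qed.

Definition prodR (s : list R) : R := fold_right Rmult 1%R s.

Lemma Cmod_prodC l : Cmod (prodC l) = prodR (map Cmod l).
Proof.
  induction l; simpl. apply Cmod_1. rewrite Cmod_mult, IHl. reflexivity.
Qed.

Lemma prodC_poch_S (l : list C) n :
  prodC (map (fun ai => poch ai (S n)) l) =
  prodC (map (fun ai => poch ai n) l) * prodC (map (fun ai => ai + RtoC (INR n)) l).
Proof.
  unfold prodC. induction l; cbn [map fold_right] in *.
  - rewrite Cmult_1_l. reflexivity.
  - rewrite IHl. rewrite poch_S. ring.
Qed.

Lemma add_eq0 (u v : C) : u + v = 0 -> u = - v.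
Proof. intros E. replace u with ((u + v) - v) by ring. rewrite E. ring. Qed.

Lemma poch_nz u n : (forall m : nat, u <> - RtoC (INR m)) -> poch u n <> 0.
Proof.
  intros H. induction n.
  - intro E. injection E. lra.
  - rewrite poch_S. apply Cmult_neq_0; auto.
    intros E. apply (H n). apply add_eq0; exact E.
Qed.

Lemma prodC_nz (l : list C) : (forall x, In x l -> x <> 0) -> prodC l <> 0.
Proof.
  unfold prodC. induction l; cbn [fold_right]; intros H.
  - intro E. injection E. lra.
  - apply Cmult_neq_0. apply H; left; auto. apply IHl. intros; apply H; right; auto.
Qed.

Lemma fact_nz n : RtoC (INR (fact n)) <> 0.
Proof.
  intro E. apply (INR_fact_neq_0 n). apply (f_equal fst) in E. simpl in E. exact E.
Qed.
Lemma ratio_summable (t : nat -> C) (r : nat -> R) (L : R) :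
  (forall n, Cmod (t (S n)) = (Cmod (t n) * r n)%R) ->
  is_lim_seq r L -> (L < 1)%R -> ex_series t.
Proof.
  intros Ht Hr HL.
  set (rho := ((Rmax L 0 + 1)/2)%R).
  assert (Hrho1 : (rho < 1)%R) by (unfold rho, Rmax; destruct Rle_dec; lra).
  assert (Hrho0 : (0 <= rho)%R) by (unfold rho, Rmax; destruct Rle_dec; lra).
  apply is_lim_seq_spec in Hr.
  assert (Heps : (0 < rho - L)%R) by (unfold rho, Rmax; destruct Rle_dec; lra).
  destruct (Hr (mkposreal _ Heps)) as [N HN]. simpl in HN.
  assert (Hb : forall n, (N <= n)%nat -> (r n <= rho)%R).
  { intros n Hn. specialize (HN n Hn). apply Rabs_lt_between in HN. lra. }
  apply (ex_series_incr_n t N).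
  apply (@ex_series_le C_AbsRing C_CompleteNormedModule (fun k => t (N + k)%nat) (fun k => (Cmod (t N) * rho ^ k)%R)).
  - intros k. change (Cmod (t (N + k)%nat) <= Cmod (t N) * rho ^ k)%R. induction k.
    + rewrite Nat.add_0_r. simpl. lra.
    + rewrite Nat.add_succ_r, Ht. simpl.
      assert (0 <= Cmod (t (N + k)%nat))%R by apply Cmod_ge_0.
      specialize (Hb (N+k)%nat ltac:(lia)).
      assert (0 <= r (N+k)%nat \/ r (N+k)%nat < 0)%R as [Hp|Hn] by lra.
      * apply Rle_trans with (Cmod (t N) * rho ^ k * rho)%R; [|lra].
        apply Rle_trans with (Cmod (t (N + k)%nat) * rho)%R.
        apply Rmult_le_compat_l; lra.
        apply Rmult_le_compat_r; lra.
      * assert (0 <= Cmod (t N) * rho ^ k)%R.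
        { apply Rmult_le_pos. apply Cmod_ge_0. apply pow_le; lra. }
        nra.
  - apply (ex_series_scal (K:=R_AbsRing) (V:=R_NormedModule) (Cmod (t N)) (fun k => rho ^ k)%R).
    apply ex_series_geom. rewrite Rabs_right; lra.
Qed.
Definition Xl (l : list C) (n : nat) : R :=
  prodR (map (fun u => Cmod (u + RtoC (INR n)) / INR (S n))%R l).

Lemma lim_one (u : C) : is_lim_seq (fun n => Cmod (u + RtoC (INR n)) / INR (S n))%R 1%R.
Proof.
  set (K := Cmod (u - 1)).
  apply is_lim_seq_le_le with (u := fun n => (1 - K * / INR (S n))%R)
                              (w := fun n => (1 + K * / INR (S n))%R).
  - intros n. assert (Hs : (0 < INR (S n))%R) by (apply lt_0_INR; lia).
    assert (E1 : u + RtoC (INR n) = (u - 1) + RtoC (INR (S n))).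
    { rewrite S_INR. apply injective_projections; simpl; ring. }
    assert (E2 : RtoC (INR (S n)) = (u + RtoC (INR n)) + (1 - u)).
    { rewrite S_INR. apply injective_projections; simpl; ring. }
    assert (T1 := Cmod_triangle (u - 1) (RtoC (INR (S n)))).
    assert (T2 := Cmod_triangle (u + RtoC (INR n)) (1 - u)).
    rewrite <- E1 in T1. rewrite <- E2 in T2.
    rewrite Cmod_R, Rabs_right in T1, T2 by lra.
    assert (E3 : Cmod (1 - u) = K).
    { unfold K. rewrite <- Cmod_opp. f_equal. ring. }
    fold K in T1. rewrite E3 in T2.
    split.
    + apply (Rmult_le_reg_r (INR (S n))); auto.
      unfold Rdiv. rewrite Rmult_assoc, Rinv_l by lra.
      rewrite Rmult_minus_distr_r, Rmult_assoc, Rinv_l by lra. lra.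
    + apply (Rmult_le_reg_r (INR (S n))); auto.
      unfold Rdiv. rewrite Rmult_assoc, Rinv_l by lra.
      rewrite Rmult_plus_distr_r, Rmult_assoc, Rinv_l by lra. lra.
  - assert (H0 : is_lim_seq (fun n => / INR (S n))%R 0%R).
    { replace (Finite 0) with (Rbar_inv p_infty) by reflexivity.
      apply is_lim_seq_inv; [|discriminate].
      apply (is_lim_seq_incr_1 INR p_infty), is_lim_seq_INR. }
    replace 1%R with (1 - K * 0)%R at 1 by ring.
    apply is_lim_seq_minus'. apply is_lim_seq_const.
    apply is_lim_seq_mult'; [apply is_lim_seq_const| exact H0].
  - assert (H0 : is_lim_seq (fun n => / INR (S n))%R 0%R).
    { replace (Finite 0) with (Rbar_inv p_infty) by reflexivity.
      apply is_lim_seq_inv; [|discriminate].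
      apply (is_lim_seq_incr_1 INR p_infty), is_lim_seq_INR. }
    replace 1%R with (1 + K * 0)%R at 1 by ring.
    apply is_lim_seq_plus'. apply is_lim_seq_const.
    apply is_lim_seq_mult'; [apply is_lim_seq_const| exact H0].
Qed.

Lemma lim_Xl l : is_lim_seq (Xl l) 1%R.
Proof.
  induction l; unfold Xl, prodR in *; cbn [map fold_right].
  - apply is_lim_seq_const.
  - assert (H := is_lim_seq_mult' _ _ 1%R 1%R (lim_one a) IHl).
    replace (1 * 1)%R with 1%R in H by ring. exact H.
Qed.
Lemma Cmod_prod_shift l n :
  Cmod (prodC (map (fun u => u + RtoC (INR n)) l)) = (Xl l n * INR (S n) ^ length l)%R.
Proof.
  assert (Hs : (0 < INR (S n))%R) by (apply lt_0_INR; lia).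
  induction l; unfold Xl, prodR, prodC in *; cbn [map fold_right length pow].
  - rewrite Cmod_1; ring.
  - rewrite Cmod_mult, IHl. field. lra.
Qed.

Lemma hyp_ratio a b z n :
  (forall bi, In bi b -> forall n : nat, bi <> - RtoC (INR n)) ->
  hyp_term a b z (S n) = hyp_term a b z n *
   (z * prodC (map (fun u => u + RtoC (INR n)) a) /
    prodC (map (fun u => u + RtoC (INR n)) b) / RtoC (INR (S n))).
Proof.
  intros Hb. unfold hyp_term. rewrite !prodC_poch_S.
  assert (H1 : prodC (map (fun ai => poch ai n) b) <> 0).
  { apply prodC_nz. intros x Hx. apply in_map_iff in Hx. destruct Hx as [bi [<- Hi]].
    apply poch_nz. apply Hb; auto. }
  assert (H2 : prodC (map (fun u => u + RtoC (INR n)) b) <> 0).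
  { apply prodC_nz. intros x Hx. apply in_map_iff in Hx. destruct Hx as [bi [<- Hi]].
    intro E. apply (Hb bi Hi n). apply add_eq0; exact E. }
  assert (H3 : RtoC (INR (S n)) <> 0).
  { intro E. apply (not_0_INR (S n)); [lia|]. apply (f_equal fst) in E. simpl in E. exact E. }
  assert (H4 := fact_nz n).
  replace (fact (S n)) with (S n * fact n)%nat by reflexivity.
  rewrite mult_INR, RtoC_mult, Cpow_S.
  field. auto.
Qed.

Lemma lim_invpow k : is_lim_seq (fun n => (/ INR (S n)) ^ k)%R (0 ^ k)%R.
Proof.
  assert (H0 : is_lim_seq (fun n => / INR (S n))%R 0%R).
  { replace (Finite 0) with (Rbar_inv p_infty) by reflexivity.
    apply is_lim_seq_inv; [|discriminate].
    apply (is_lim_seq_incr_1 INR p_infty), is_lim_seq_INR. }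
  induction k; simpl.
  - apply is_lim_seq_const.
  - apply is_lim_seq_mult'; auto.
Qed.

Lemma hyp_conv a b z :
  (forall bi, In bi b -> forall n : nat, bi <> - RtoC (INR n)) ->
  ((length a <= length b)%nat \/ (length a = S (length b) /\ (Cmod z < 1)%R)) ->
  ex_series (hyp_term a b z).
Proof.
  intros Hb Hc.
  set (p := length a). set (q := length b).
  assert (Hpq : (p <= S q)%nat) by (destruct Hc as [H|[H _]]; unfold p, q in *; lia).
  set (k := (S q - p)%nat).
  apply ratio_summable with
    (r := fun n => (Cmod z * Xl a n / Xl b n * (/ INR (S n)) ^ k)%R)
    (L := (Cmod z * 1 / 1 * 0 ^ k)%R).
  - intros n. rewrite hyp_ratio by auto. rewrite Cmod_mult. f_equal.
    assert (Hs : (0 < INR (S n))%R) by (apply lt_0_INR; lia).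
    assert (H2 : prodC (map (fun u => u + RtoC (INR n)) b) <> 0).
    { apply prodC_nz. intros x Hx. apply in_map_iff in Hx. destruct Hx as [bi [<- Hi]].
      intro E. apply (Hb bi Hi n). apply add_eq0; exact E. }
    assert (H3 : RtoC (INR (S n)) <> 0).
    { intro E. apply (f_equal fst) in E. change (INR (S n) = 0%R) in E. lra. }
    rewrite !Cmod_div, Cmod_mult by auto.
    rewrite !Cmod_prod_shift, Cmod_R, Rabs_right by lra.
    assert (HX : (Xl b n * INR (S n) ^ length b <> 0)%R).
    { rewrite <- Cmod_prod_shift. intro E. apply H2, Cmod_eq_0; auto. }
    assert (HXb : Xl b n <> 0%R) by (intro E; apply HX; rewrite E; ring).
    fold p q.
    assert (Hsk : (INR (S n) * INR (S n) ^ q = INR (S n) ^ p * INR (S n) ^ k)%R).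
    { rewrite <- pow_add. change (INR (S n) * INR (S n) ^ q)%R with (INR (S n) ^ (S q))%R. f_equal. unfold k. lia. }
    assert (INR (S n) ^ k <> 0)%R by (apply pow_nonzero; lra).
    assert (INR (S n) ^ q <> 0)%R by (apply pow_nonzero; lra).
    assert (INR (S n) ^ p <> 0)%R by (apply pow_nonzero; lra).
    assert (E : ((/ INR (S n)) ^ k * INR (S n) ^ k = 1)%R)
      by (rewrite <- Rpow_mult_distr, Rinv_l, pow1; lra).
    assert (E2 : ((/ INR (S n)) ^ k = / (INR (S n) ^ k))%R).
    { apply (Rmult_eq_reg_r (INR (S n) ^ k)); auto. rewrite E, Rinv_l; auto. }
    rewrite E2.
    replace (Xl b n * INR (S n) ^ q)%R with (Xl b n * (INR (S n) ^ p * INR (S n) ^ k) / INR (S n))%R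
      by (rewrite <- Hsk; field; lra).
    field. repeat split; auto; lra.
  - apply is_lim_seq_mult'; [|apply lim_invpow].
    apply is_lim_seq_div'; [| apply lim_Xl | lra].
    apply is_lim_seq_mult'; [apply is_lim_seq_const| apply lim_Xl].
  - destruct k eqn:Ek.
    + destruct Hc as [H|[_ H]]; unfold p, q in *; [lia|]. simpl. lra.
    + simpl. lra.
Qed.
Lemma alpha_eq : alpha = (cos (2 * PI / 5), sin (2 * PI / 5))%R.
Proof.
  unfold alpha, Cexp. simpl Re. simpl Im. rewrite exp_0.
  apply injective_projections; simpl; ring.
Qed.

Lemma demoivre t n : Cpow (cos t, sin t)%R n = (cos (INR n * t), sin (INR n * t))%R.
Proof.
  induction n.
  - simpl. rewrite Rmult_0_l, cos_0, sin_0. reflexivity.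
  - rewrite Cpow_S, IHn, S_INR.
    replace ((INR n + 1) * t)%R with (t + INR n * t)%R by ring.
    rewrite cos_plus, sin_plus.
    apply injective_projections; simpl; ring.
Qed.

Lemma alpha5 : Cpow alpha 5 = 1.
Proof.
  rewrite alpha_eq, demoivre.
  replace (INR 5 * (2 * PI / 5))%R with (2 * PI)%R by (simpl; field).
  rewrite cos_2PI, sin_2PI. reflexivity.
Qed.

Lemma alpha_ne1 : alpha <> 1.
Proof.
  rewrite alpha_eq. intro E. apply (f_equal snd) in E. simpl in E.
  assert (0 < sin (2 * PI / 5))%R.
  { apply sin_gt_0. assert (0 < PI) by apply PI_RGT_0. lra.
    assert (0 < PI) by apply PI_RGT_0. lra. }
  lra.
Qed.

Lemma Cmod_alpha : Cmod alpha = 1%R.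
Proof.
  unfold Cmod. rewrite alpha_eq. cbn [fst snd].
  rewrite <- sqrt_1. f_equal.
  pose proof (sin2_cos2 (2 * PI / 5)) as H. unfold Rsqr in H. simpl. nra.
Qed.

Lemma alpha_pow_mod n : Cpow alpha n = Cpow alpha (n mod 5).
Proof.
  rewrite (Nat.div_mod_eq n 5) at 1.
  rewrite Cpow_add_r, Cpow_mult_r, alpha5, Cpow_1_l. ring.
Qed.

Lemma alpha_pow_ne1 r : (1 <= r <= 4)%nat -> Cpow alpha r <> 1.
Proof.
  intros Hr E. apply alpha_ne1.
  assert (H : forall s, Cpow alpha (r * s) = 1).
  { intros s. rewrite Cpow_mult_r, E. apply Cpow_1_l. }
  assert (r = 1 \/ r = 2 \/ r = 3 \/ r = 4)%nat as [ -> | [ -> | [ -> | -> ] ] ] by lia.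
  - rewrite <- (H 1%nat). symmetry. apply Cpow_1_r.
  - rewrite <- (H 3%nat), (alpha_pow_mod (2*3)). symmetry. apply Cpow_1_r.
  - rewrite <- (H 2%nat), (alpha_pow_mod (3*2)). symmetry. apply Cpow_1_r.
  - rewrite <- (H 4%nat), (alpha_pow_mod (4*4)). symmetry. apply Cpow_1_r.
Qed.

Lemma geom5 (be : C) : Cpow be 5 = 1 -> be <> 1 ->
  1 + (be + (Cpow be 2 + (Cpow be 3 + (Cpow be 4 + 0)))) = 0.
Proof.
  intros H5 H1.
  assert (E : (be - 1) * (1 + (be + (Cpow be 2 + (Cpow be 3 + (Cpow be 4 + 0))))) = Cpow be 5 - 1)
    by (simpl; ring).
  rewrite H5 in E.
  assert (be - 1 <> 0) by (intro E'; apply H1; rewrite <- (Cplus_0_l 1), <- E'; ring).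
  replace (1 + (be + (Cpow be 2 + (Cpow be 3 + (Cpow be 4 + 0))))) with
    (/ (be - 1) * ((be - 1) * (1 + (be + (Cpow be 2 + (Cpow be 3 + (Cpow be 4 + 0)))))))
    by (field; auto).
  rewrite E. ring.
Qed.

Lemma rootsum n :
  let be := Cpow alpha (2 * n + 1) in
  1 + (be + (Cpow be 2 + (Cpow be 3 + (Cpow be 4 + 0)))) =
  if (n mod 5 =? 2)%nat then 5 else 0.
Proof.
  intros be.
  destruct (Nat.eqb_spec (n mod 5) 2) as [Hn|Hn].
  - assert (Hb : be = 1).
    { unfold be. rewrite alpha_pow_mod.
      replace ((2 * n + 1) mod 5)%nat with 0%nat. reflexivity.
      rewrite Nat.add_mod, Nat.mul_mod, Hn by lia. reflexivity. }
    rewrite Hb, !Cpow_1_l. apply injective_projections; simpl; ring.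
  - apply geom5.
    + unfold be. rewrite <- Cpow_mult_r. rewrite Nat.mul_comm, Cpow_mult_r, alpha5. apply Cpow_1_l.
    + unfold be. rewrite alpha_pow_mod. apply alpha_pow_ne1.
      assert (n mod 5 < 5)%nat by (apply Nat.mod_upper_bound; lia).
      assert ((2 * n + 1) mod 5 <> 0)%nat.
      { rewrite Nat.add_mod, Nat.mul_mod by lia.
        assert (n mod 5 = 0 \/ n mod 5 = 1 \/ n mod 5 = 3 \/ n mod 5 = 4)%nat
          as [E|[E|[E|E]]] by lia; rewrite E; simpl; lia. }
      assert ((2 * n + 1) mod 5 < 5)%nat by (apply Nat.mod_upper_bound; lia).
      lia.
Qed.
Lemma sum_n_zero N : sum_n (fun _ : nat => (0 : C)) N = (0 : C).
Proof.
  induction N. rewrite sum_O. reflexivity.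
  rewrite sum_Sn, IHN. change ((0:C) + 0 = 0). ring.
Qed.

Lemma is_series_zero : is_series (fun _ : nat => (0 : C)) (0 : C).
Proof.
  unfold is_series.
  apply (filterlim_ext (fun _ => (0:C))). intros N; symmetry; apply sum_n_zero.
  apply filterlim_const.
Qed.


Lemma combine_list (f : nat -> nat -> C) (l : nat -> C) (ks : list nat) :
  (forall k, is_series (f k) (l k)) ->
  is_series (fun n => fold_right Cplus 0 (map (fun k => Cpow alpha k * f k n) ks))
            (fold_right Cplus 0 (map (fun k => Cpow alpha k * l k) ks)).
Proof.
  intros H. induction ks as [|k ks IH]; cbn [map fold_right].
  - exact is_series_zero.
  - exact (is_series_plus _ _ _ _ (is_series_scal (Cpow alpha k) _ _ (H k)) IH).
Qed.

Lemma compress (U : nat -> C) L :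
  (forall n, (n mod 5 <> 2)%nat -> U n = 0) ->
  is_series U L -> is_series (fun m => U (5 * m + 2)%nat) L.
Proof.
  intros HU HL.
  assert (Hs : forall m, sum_n (fun m => U (5 * m + 2)%nat) m = sum_n U (5 * m + 4)).
  { assert (Z : forall j, (j mod 5 <> 2)%nat -> U j = 0) by exact HU.
    induction m.
    - rewrite sum_O. simpl.
      rewrite !sum_Sn, sum_O.
      rewrite (Z 0%nat), (Z 1%nat), (Z 3%nat), (Z 4%nat) by (simpl; lia).
      change (U 2%nat = 0 + 0 + U 2%nat + 0 + 0). ring.
    - rewrite sum_Sn, IHm.
      replace (5 * S m + 4)%nat with (S (S (S (S (S (5 * m + 4))))))%nat by lia.
      rewrite !sum_Sn.
      assert (E1 : ((S (5 * m + 4)) = 5 * (m + 1) + 0)%nat) by lia.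
      assert (E2 : ((S (S (5 * m + 4))) = 5 * (m + 1) + 1)%nat) by lia.
      assert (E3 : ((S (S (S (5 * m + 4)))) = 5 * S m + 2)%nat) by lia.
      assert (E4 : ((S (S (S (S (5 * m + 4))))) = 5 * (m + 1) + 3)%nat) by lia.
      assert (E5 : ((S (S (S (S (S (5 * m + 4)))))) = 5 * (m + 1) + 4)%nat) by lia.
      rewrite E5, E4, E3, E2, E1.
      rewrite (Z (5 * (m + 1) + 0)%nat), (Z (5 * (m + 1) + 1)%nat),
              (Z (5 * (m + 1) + 3)%nat), (Z (5 * (m + 1) + 4)%nat).
      change (sum_n U (5 * m + 4) + U (5 * S m + 2)%nat =
              sum_n U (5 * m + 4) + 0 + 0 + U (5 * S m + 2)%nat + 0 + 0). ring.
      all: rewrite Nat.add_comm, Nat.mul_comm, Nat.Div0.mod_add; simpl; lia. }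
  unfold is_series in *.
  apply (filterlim_ext (fun m => sum_n U (5 * m + 4))). intros; symmetry; apply Hs.
  apply (filterlim_comp _ _ _ (fun m => 5 * m + 4)%nat (sum_n U) eventually eventually).
  - intros P [N HN]. exists N. intros n Hn. apply HN. lia.
  - exact HL.
Qed.
Lemma C5nz : (5 : C) <> 0.
Proof. intro E. apply (f_equal fst) in E. change (5 = 0)%R in E. lra. Qed.
Lemma C2nz : (2 : C) <> 0.
Proof. intro E. apply (f_equal fst) in E. change (2 = 0)%R in E. lra. Qed.

Lemma RtoC_INR_S n : RtoC (INR (S n)) = RtoC (INR n) + 1.
Proof. rewrite S_INR. unfold RtoC, Cplus. cbn [fst snd]. f_equal; lra. Qed.

Lemma INR5 m k : RtoC (INR (5 * m + k)) = 5 * RtoC (INR m) + RtoC (INR k).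
Proof. rewrite plus_INR, mult_INR. replace (INR 5) with 5%R by (simpl; lra). unfold RtoC, Cplus, Cmult. cbn [fst snd]. f_equal; lra. Qed.

Lemma poch_add5 u n : poch u (n + 5) = poch u n *
  ((u + RtoC (INR n)) * (u + RtoC (INR n) + 1) * (u + RtoC (INR n) + 2) *
   (u + RtoC (INR n) + 3) * (u + RtoC (INR n) + 4)).
Proof.
  rewrite !Nat.add_succ_r, Nat.add_0_r, !poch_S, !RtoC_INR_S.
  ring.
Qed.

Lemma poch5 u m : poch u (5 * m + 2) =
  poch u 2 * (Cpow 5 (5 * m) * prodC (map (fun v => poch v m) (shift5 u))).
Proof.
  induction m.
  - change (poch u 2 = poch u 2 * (1 * (1 * (1 * (1 * (1 * (1 * 1))))))). ring.
  - replace (5 * S m + 2)%nat with ((5 * m + 2) + 5)%nat by lia.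
    rewrite poch_add5, IHm.
    replace (5 * S m)%nat with (5 * m + 5)%nat by lia.
    rewrite Cpow_add_r.
    unfold shift5. cbn [map prodC fold_right]. rewrite !(poch_S _ m).
    rewrite INR5.
    assert (H5 := C5nz).
    replace (RtoC (INR 2)) with (2 : C) by (unfold RtoC; f_equal; simpl; lra).
    set (M := RtoC (INR m)).
    set (P := Cpow 5 (5 * m)).
    set (p2 := poch ((u + 2) / 5) m). set (p3 := poch ((u + 3) / 5) m).
    set (p4 := poch ((u + 4) / 5) m). set (p5 := poch ((u + 5) / 5) m).
    set (p6 := poch ((u + 6) / 5) m). set (q := poch u 2).
    simpl Cpow. field.
Qed.
Lemma RtoC_INR_0 : RtoC (INR 0) = 0.
Proof. reflexivity. Qed.

Lemma fact_add5 n : RtoC (INR (fact (n + 5))) = RtoC (INR (fact n)) *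
  ((RtoC (INR n) + 1) * (RtoC (INR n) + 2) * (RtoC (INR n) + 3) *
   (RtoC (INR n) + 4) * (RtoC (INR n) + 5)).
Proof.
  rewrite !Nat.add_succ_r, Nat.add_0_r, !fact_simpl, !mult_INR, !RtoC_mult, !RtoC_INR_S.
  ring.
Qed.

Lemma fact5 m : RtoC (INR (fact (5 * m + 2))) =
  2 * Cpow 5 (5 * m) * prodC (map (fun v => poch v m) [3/5; 4/5; 6/5; 7/5]) * RtoC (INR (fact m)).
Proof.
  induction m.
  - change (RtoC (INR 2) = 2 * 1 * (1 * (1 * (1 * (1 * 1)))) * RtoC (INR 1)).
    rewrite !RtoC_INR_S, RtoC_INR_0. ring.
  - replace (5 * S m + 2)%nat with ((5 * m + 2) + 5)%nat by lia.
    rewrite fact_add5, IHm.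
    replace (5 * S m)%nat with (5 * m + 5)%nat by lia.
    rewrite Cpow_add_r.
    cbn [map prodC fold_right]. rewrite !(poch_S _ m).
    rewrite fact_simpl, mult_INR, RtoC_mult, RtoC_INR_S.
    rewrite INR5.
    replace (RtoC (INR 2)) with (2 : C) by (rewrite !RtoC_INR_S, RtoC_INR_0; ring).
    set (M := RtoC (INR m)).
    set (P := Cpow 5 (5 * m)).
    set (F := RtoC (INR (fact m))).
    set (p3 := poch (3 / 5) m). set (p4 := poch (4 / 5) m).
    set (p6 := poch (6 / 5) m). set (p7 := poch (7 / 5) m).
    simpl Cpow. field.
Qed.
Lemma pFq_spec a b z : ex_series (hyp_term a b z) -> is_series (hyp_term a b z) (pFq a b z).
Proof. intros [l H]. rewrite (pFq_val _ _ _ _ H). exact H. Qed.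

Lemma prodC_app (f : C -> C) l1 l2 :
  prodC (map f (l1 ++ l2)) = prodC (map f l1) * prodC (map f l2).
Proof.
  unfold prodC. induction l1; cbn [map fold_right app].
  - ring.
  - rewrite IHl1. ring.
Qed.

Lemma prodC_flat (f : C -> C) l :
  prodC (map f (flat_map shift5 l)) = prodC (map (fun u => prodC (map f (shift5 u))) l).
Proof.
  induction l; cbn [flat_map map].
  - reflexivity.
  - rewrite prodC_app, IHl. reflexivity.
Qed.

Lemma prodC_poch5 l m :
  prodC (map (fun ai => poch ai (5 * m + 2)) l) =
  prodC (map (fun ai => poch ai 2) l) *
  (Cpow (Cpow 5 (5 * m)) (length l) *
   prodC (map (fun u => prodC (map (fun v => poch v m) (shift5 u))) l)).
Proof.
  induction l; cbn [map length].
  - unfold prodC; cbn [fold_right]. simpl Cpow. ring.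
  - rewrite poch5. unfold prodC in *; cbn [fold_right]. rewrite IHl, Cpow_S.
    set (E := Cpow 5 (5 * m)). set (El := Cpow E (length l)). ring.
Qed.

Lemma D_eq p q : (p <= S q)%nat ->
  RtoC (powerRZ 5 (1 + Z.of_nat q - Z.of_nat p)) = Cpow 5 (S q - p).
Proof.
  intros H. replace (1 + Z.of_nat q - Z.of_nat p)%Z with (Z.of_nat (S q - p)) by lia.
  rewrite <- pow_powerRZ, RtoC_pow. reflexivity.
Qed.

Lemma alg (A2 B2 PA PB Q Fm E Eq Ep Ek W w c x : C) :
  w = c * Cpow x 2 -> Eq * E = Ep * Ek -> B2 <> 0 -> PB <> 0 -> Q <> 0 -> Fm <> 0 ->
  E <> 0 -> Eq <> 0 -> Ek <> 0 ->
  A2 * (Ep * PA) / (B2 * (Eq * PB)) * (Cpow w 2 * W) / (2 * E * Q * Fm) * 5 =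
  5 * Cpow c 2 * Cpow x 4 / 2 * (A2 / B2) * (PA / (Q * PB) * (W / Ek) / Fm).
Proof.
  intros Hw HE H1 H2 H3 H4 H5 H6 H7. subst w.
  assert (Ep = Eq * E / Ek) by (rewrite HE; field; auto).
  subst Ep. field. repeat split; auto.
Qed.
Lemma Cpow_div (w X : C) n : X <> 0 -> Cpow (w / X) n = Cpow w n / Cpow X n.
Proof. intros H. unfold Cdiv. rewrite Cpow_mult_l, Cpow_inv; auto. Qed.

Lemma mul_nz_l (x y : C) : x * y <> 0 -> x <> 0.
Proof. intros H E. apply H. rewrite E. ring. Qed.
Lemma mul_nz_r (x y : C) : x * y <> 0 -> y <> 0.
Proof. intros H E. apply H. rewrite E. ring. Qed.

Lemma term_id a b c x m :
  (forall bi, In bi b -> forall n : nat, bi <> - RtoC (INR n)) ->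
  (length a <= S (length b))%nat ->
  hyp_term a b (c * Cpow x 2) (5 * m + 2) * 5 =
  5 * Cpow c 2 * Cpow x 4 / 2 *
  (prodC (map (fun ai => poch ai 2) a) / prodC (map (fun bi => poch bi 2) b)) *
  hyp_term (flat_map shift5 a) ([3/5; 4/5; 6/5; 7/5] ++ flat_map shift5 b)
    (Cpow (c * Cpow x 2 /
       RtoC (powerRZ 5 (1 + Z.of_nat (length b) - Z.of_nat (length a)))) 5) m.
Proof.
  intros Hb Hpq.
  assert (HB := prodC_nz (map (fun bi => poch bi (5 * m + 2)) b)).
  assert (HB' : prodC (map (fun bi => poch bi (5 * m + 2)) b) <> 0).
  { apply HB. intros y Hy. apply in_map_iff in Hy. destruct Hy as [bi [<- Hi]].
    apply poch_nz. apply Hb; auto. }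
  clear HB.
  assert (HF := fact_nz (5 * m + 2)).
  unfold hyp_term.
  rewrite !prodC_poch5, fact5.
  rewrite prodC_poch5 in HB'. rewrite fact5 in HF.
  rewrite prodC_app, !prodC_flat.
  rewrite D_eq by auto.
  assert (H5k : Cpow 5 (S (length b) - length a) <> 0) by (apply Cpow_nz, C5nz).
  set (k := (S (length b) - length a)%nat) in *.
  rewrite (Cpow_div (c * Cpow x 2) _ 5) by auto.
  rewrite Cpow_div by (apply Cpow_nz; auto).
  rewrite <- (Cpow_mult_r (Cpow 5 k) 5 m), <- (Cpow_mult_r 5 k (5 * m)), (Nat.mul_comm k (5 * m)),
    (Cpow_mult_r 5 (5 * m) k), <- (Cpow_mult_r (c * Cpow x 2) 5 m).
  rewrite (Nat.add_comm (5 * m) 2), Cpow_add_r.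
  assert (HE : Cpow 5 (5 * m) <> 0) by (apply Cpow_nz, C5nz).
  apply alg.
  - reflexivity.
  - rewrite <- Cpow_add_r. rewrite Cmult_comm, <- Cpow_S. f_equal. lia.
  - exact (mul_nz_l _ _ HB').
  - exact (mul_nz_r _ _ (mul_nz_r _ _ HB')).
  - exact (mul_nz_r _ _ (mul_nz_l _ _ HF)).
  - exact (mul_nz_r _ _ HF).
  - exact HE.
  - apply Cpow_nz; exact HE.
  - apply Cpow_nz; exact HE.
Qed.
Lemma hyp_term_scale a b w u n : hyp_term a b (w * u) n = hyp_term a b w n * Cpow u n.
Proof.
  unfold hyp_term. rewrite Cpow_mult_l. unfold Cdiv.
  set (A := prodC (map (fun ai => poch ai n) a)).
  set (B := prodC (map (fun bi => poch bi n) b)).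
  set (W := Cpow w n). set (U := Cpow u n). ring.
Qed.

Lemma zk_eq c x k : c * Cpow (x * Cpow alpha k) 2 = (c * Cpow x 2) * Cpow alpha (2 * k).
Proof.
  rewrite Cpow_mult_l, (Nat.mul_comm 2 k), Cpow_mult_r. ring.
Qed.

Lemma term_k a b c x n k :
  Cpow alpha k * hyp_term a b (c * Cpow (x * Cpow alpha k) 2) n =
  hyp_term a b (c * Cpow x 2) n * Cpow (Cpow alpha (2 * n + 1)) k.
Proof.
  rewrite zk_eq, hyp_term_scale.
  rewrite <- !Cpow_mult_r.
  replace ((2 * n + 1) * k)%nat with (k + 2 * k * n)%nat by ring.
  rewrite Cpow_add_r.
  set (H := hyp_term a b (c * Cpow x 2) n).
  set (A := Cpow alpha k). set (B := Cpow alpha (2 * k * n)). ring.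
Qed.

Lemma termsum a b c x n :
  fold_right Cplus 0
    (map (fun k => Cpow alpha k * hyp_term a b (c * Cpow (x * Cpow alpha k) 2) n) (seq 0 5)) =
  hyp_term a b (c * Cpow x 2) n * (if (n mod 5 =? 2)%nat then 5 else 0).
Proof.
  cbn [seq map fold_right].
  rewrite !term_k.
  rewrite <- (rootsum n).
  set (H := hyp_term a b (c * Cpow x 2) n).
  set (be := Cpow alpha (2 * n + 1)).
  simpl Cpow. ring.
Qed.

Lemma Cmod_zk c x k : Cmod (c * Cpow (x * Cpow alpha k) 2) = Cmod (c * Cpow x 2).
Proof.
  rewrite zk_eq, Cmod_mult, Cmod_pow, Cmod_alpha, pow1. ring.
Qed.
Theorem theorem8 (c x : C) (a b : list C) :
  (forall bi, In bi b -> forall n : nat, bi <> - RtoC (INR n)) ->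
  ((5 * length a <= 5 * length b + 4)%nat \/
   (length a = S (length b) /\
    (Cmod (Cpow (c * Cpow x 2 /
      RtoC (powerRZ 5 (1 + Z.of_nat (length b) - Z.of_nat (length a)))) 5)
      < 1)%R)) ->
  fold_right Cplus 0
    (map (fun k : nat => Cpow alpha k * pFq a b (c * Cpow (x * Cpow alpha k) 2))
       (seq 0 5))
  = 5 * Cpow c 2 * Cpow x 4 / 2
    * (prodC (map (fun ai => poch ai 2) a) / prodC (map (fun bi => poch bi 2) b))
    * pFq (flat_map shift5 a)
          ([3/5; 4/5; 6/5; 7/5] ++ flat_map shift5 b)
          (Cpow (c * Cpow x 2 /
             RtoC (powerRZ 5 (1 + Z.of_nat (length b) - Z.of_nat (length a)))) 5).
Proof.
  intros Hb Hc.
  assert (Hpq : (length a <= S (length b))%nat) by (destruct Hc as [H|[H _]]; lia).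
  assert (Hconv : forall k, ex_series (hyp_term a b (c * Cpow (x * Cpow alpha k) 2))).
  { intros k. apply hyp_conv; auto.
    destruct Hc as [H|[H1 H2]]; [left; lia|right; split; auto].
    rewrite Cmod_zk.
    rewrite D_eq in H2 by lia. rewrite H1 in H2.
    replace (S (length b) - S (length b))%nat with 0%nat in H2 by lia.
    rewrite Cmod_pow in H2. change (Cpow 5 0) with (1:C) in H2.
    replace (c * Cpow x 2 / 1) with (c * Cpow x 2) in H2 by (field).
    destruct (Rlt_le_dec (Cmod (c * Cpow x 2)) 1) as [Hl|Hl]; auto.
    apply (pow_R1_Rle _ 5) in Hl.  lra. }
  set (LHS := fold_right Cplus 0 _).
  assert (H1 : is_series (fun n => fold_right Cplus 0
      (map (fun k => Cpow alpha k * hyp_term a b (c * Cpow (x * Cpow alpha k) 2) n) (seq 0 5))) LHS).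
  { apply (combine_list (fun k n => hyp_term a b (c * Cpow (x * Cpow alpha k) 2) n)
                        (fun k => pFq a b (c * Cpow (x * Cpow alpha k) 2))).
    intros k. apply pFq_spec, Hconv. }
  apply (is_series_ext _ _ _ (termsum a b c x)) in H1.
  apply compress in H1.
  2: { intros n Hn. apply Nat.eqb_neq in Hn. rewrite Hn. ring. }
  assert (Hm : forall m, ((5 * m + 2) mod 5 =? 2)%nat = true).
  { intros m. apply Nat.eqb_eq. rewrite Nat.add_comm, Nat.mul_comm, Nat.Div0.mod_add. reflexivity. }
  set (K := 5 * Cpow c 2 * Cpow x 4 / 2 *
      (prodC (map (fun ai => poch ai 2) a) / prodC (map (fun bi => poch bi 2) b))).
  set (T := hyp_term (flat_map shift5 a) ([3/5; 4/5; 6/5; 7/5] ++ flat_map shift5 b)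
    (Cpow (c * Cpow x 2 /
       RtoC (powerRZ 5 (1 + Z.of_nat (length b) - Z.of_nat (length a)))) 5)).
  assert (H2 : is_series (fun m => K * T m) LHS).
  { refine (is_series_ext _ _ _ _ H1). intros m. rewrite Hm. unfold K, T.
    apply term_id; auto. }
  destruct (Ceq_dec K 0) as [HK|HK].
  - rewrite HK. rewrite Cmult_0_l.
    assert (H4 : is_series (fun _ => (0:C)) LHS).
    { refine (is_series_ext _ _ _ _ H2). intros m. rewrite HK. apply Cmult_0_l. }
    exact (is_series_unique_C _ _ _ H4 is_series_zero).
  - assert (H3 : is_series (fun m => / K * (K * T m)) (/ K * LHS))
      by exact (is_series_scal (/ K) _ _ H2).
    assert (H4 : is_series T (/ K * LHS)).
    { refine (is_series_ext _ _ _ _ H3). intros m. change (/ K * (K * T m) = T m). field. exact HK. }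
    unfold T in H4. rewrite (pFq_val _ _ _ _ H4). field. exact HK.
Qed.
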